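(* Let $c>0$, let $v\in\mathbb{R}^d$, and let $\xi$ be a random vector in $\mathbb{R}^d$ with density $\tilde p$ satisfying $\tilde p(\xi)=\tilde p(-\xi)$ for all $\xi$. Let $g=\mathrm{clip}(v+\xi,c)$. Then: 1. If $\|v\|\le\frac34 c$, then $\mathbb{E}_{\xi\sim\tilde p}[\langle v,g\rangle]\ge\|v\|^2\,\mathbb{P}_{\xi\sim\tilde p}\left(\|\xi\|<\frac c4\right)$. 2. If $\|v\|>\frac34 c$, then $\mathbb{E}_{\xi\sim\tilde p}[\langle v,g\rangle]\ge\frac34 c\,\|v\|\,\mathbb{P}_{\xi\sim\tilde p}\left(\|\xi\|<\frac c4\right)$.
   Context: For $g\in\mathbb{R}^d$ and $c>0$, $\mathrm{clip}(g,c)=g\cdot\min\left(1,\frac{c}{\|g\|}\right)$ (with $\mathrm{clip}(0,c)=0$); $\|\cdot\|$ is the Euclidean norm. In the paper $v$ is the true gradient $\nabla f(x_t)$ at the current iterate and $\xi$ the gradient noise. *)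

(* Defs.v *)
From HB Require Import structures.
From mathcomp Require Import all_boot all_order all_algebra.
From mathcomp Require Import all_classical all_reals all_analysis.
Set Implicit Arguments. Unset Strict Implicit. Unset Printing Implicit Defensive.
Import Order.TTheory GRing.Theory Num.Theory.
Import numFieldNormedType.Exports.
Local Open Scope classical_set_scope.
Local Open Scope ring_scope.

Definition dotv (R : realType) (d : nat) (u w : 'rV[R]_d) : R :=
  \sum_(i < d) u ord0 i * w ord0 i.

Definition enorm (R : realType) (d : nat) (u : 'rV[R]_d) : R :=
  Num.sqrt (dotv u u).

Definition clip (R : realType) (d : nat) (g : 'rV[R]_d) (c : R) : 'rV[R]_d :=
  if g == 0 then 0 else Num.min 1 (c / enorm g) *: g.

Definition box (R : realType) (d : nat) (a b : 'rV[R]_d) : set 'rV[R]_d :=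
  [set x | forall i : 'I_d, a ord0 i < x ord0 i <= b ord0 i].

Definition boxes (R : realType) (d : nat) : set (set 'rV[R]_d) :=
  [set A | exists a b, A = box a b].

(** R^d with its Borel sigma-algebra (generated by the half-open boxes). *)
Definition Rd (R : realType) (d : nat) := g_sigma_algebraType (@boxes R d).

(** [lam] is Lebesgue measure on R^d: it gives every box its volume.
    (This determines lam uniquely on the Borel sets.) *)
Definition is_lebesgue_Rd (R : realType) (d : nat)
    (lam : {measure set (Rd R d) -> \bar R}) : Prop :=
  forall a b : 'rV[R]_d,
    lam (box a b) = (\prod_(i < d) Num.max (b ord0 i - a ord0 i) 0)%:E.

Definition is_density (R : realType) (d : nat)
    (lam : {measure set (Rd R d) -> \bar R}) (p : Rd R d -> R) : Prop :=
  [/\ measurable_fun setT p, (forall x, 0 <= p x)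
    & (\int[lam]_x (p x)%:E = 1)%E].

Definition dexpect (R : realType) (d : nat)
    (lam : {measure set (Rd R d) -> \bar R}) (p : Rd R d -> R)
    (f : Rd R d -> R) : \bar R :=
  (\int[lam]_x (p x * f x)%:E)%E.

Definition dprob (R : realType) (d : nat)
    (lam : {measure set (Rd R d) -> \bar R}) (p : Rd R d -> R)
    (A : set (Rd R d)) : \bar R :=
  (\int[lam]_(x in A) (p x)%:E)%E.

(* Main.v *)
Require Import Defs.
From HB Require Import structures.
From mathcomp Require Import all_boot all_order all_algebra.
From mathcomp Require Import all_classical all_reals all_analysis.
From mathcomp Require Import measurable_realfun.
From mathcomp Require Import ring lra.
Import Order.TTheory GRing.Theory Num.Theory.
Import numFieldNormedType.Exports.
Set Implicit Arguments. Unset Strict Implicit.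
Local Open Scope classical_set_scope.
Local Open Scope ring_scope.
Section S.
Variable R : realFieldType.
Definition F (c a w : R) := if a <= c then w else c * w / a.

Lemma sq_le (x y : R) : 0 <= y -> x^+2 <= y^+2 -> x <= y.
Proof.
move=> y0 h; case: (leP x y) => // xy.
have : 0 < (x - y) * (x + y) by apply: mulr_gt0; lra.
nra.
Qed.

Lemma F_ge0 c a w : 0 < c -> 0 <= a -> 0 <= w -> 0 <= F c a w.
Proof.
move=> c0 a0 w0; rewrite /F; case: ifP => // /negbT; rewrite -ltNge => ca.
by apply: divr_ge0 => //; apply: mulr_ge0 => //; lra.
Qed.

Lemma key_ge0_pos (s r t a b c : R) : 0 <= s -> 0 <= r -> 0 <= a -> 0 <= b -> 0 < c ->
  t^+2 <= s^+2 * r^+2 -> a^+2 = s^+2 + 2*t + r^+2 -> b^+2 = s^+2 - 2*t + r^+2 -> 0 <= t ->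
  0 <= F c a (s^+2 + t) + F c b (s^+2 - t).
Proof.
move=> s0 r0 a0 b0 c0 ht ha hb t0.
have ab : b <= a by apply: sq_le => //; rewrite ha hb; lra.
case: (leP t (s^+2)) => h.
  by apply: addr_ge0; apply: F_ge0 => //; lra.
have key : (t - s^+2) * a <= (s^+2 + t) * b.
  apply: sq_le; first by apply: mulr_ge0; nra.
  rewrite !exprMn ha hb.
  have : 0 <= t * (s^+2 * r^+2 - t^+2) by apply: mulr_ge0; lra.
  nra.
have bp : 0 < b.
  case: (ltrgt0P b) => //; [lra| move=> b0'].
  by move: key; rewrite b0' mulr0; nra.
have ap : 0 < a by lra.
rewrite /F; case: ifP => ha'; case: ifP => hb'.
- nra.
- lra.
- have : (t - s^+2) <= c * (s ^+ 2 + t) / a.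
    rewrite ler_pdivlMr //. nra.
  lra.
- have : c * (t - s^+2) / b <= c * (s ^+ 2 + t) / a.
    rewrite ler_pdivlMr // mulrAC ler_pdivrMr //. nra.
  have -> : c * (s ^+ 2 - t) / b = - (c * (t - s^+2) / b).
    by rewrite -mulNr -mulrN opprB.
  lra.
Qed.

Lemma abs_t (s r t : R) : 0 <= s -> 0 <= r -> t^+2 <= s^+2 * r^+2 -> -(s*r) <= t <= s*r.
Proof.
move=> s0 r0 h; have sr0 : 0 <= s * r by apply: mulr_ge0.
have h' : t^+2 <= (s*r)^+2 by rewrite exprMn.
apply/andP; split.
  have : -t <= s * r by apply: sq_le => //; rewrite sqrrN.
  lra.
exact: sq_le.
Qed.

Lemma key_ge0 (s r t a b c : R) : 0 <= s -> 0 <= r -> 0 <= a -> 0 <= b -> 0 < c ->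
  t^+2 <= s^+2 * r^+2 -> a^+2 = s^+2 + 2*t + r^+2 -> b^+2 = s^+2 - 2*t + r^+2 ->
  0 <= F c a (s^+2 + t) + F c b (s^+2 - t).
Proof.
move=> s0 r0 a0 b0 c0 ht ha hb; have [t0|t0] := boolP (0 <= t).
  exact: (key_ge0_pos s0 r0 a0 b0 c0 ht ha hb t0).
move: t0; rewrite -ltNge => t0.

have hb2 : b^+2 = s^+2 + 2*(-t) + r^+2 by rewrite hb; lra.
have ha2 : a^+2 = s^+2 - 2*(-t) + r^+2 by rewrite ha; lra.
have ht2 : (-t)^+2 <= s^+2 * r^+2 by rewrite sqrrN.
have := key_ge0_pos s0 r0 b0 a0 c0 ht2 hb2 ha2.
rewrite opprK addrC; apply; lra.
Qed.

Lemma a_le_sr (s r t a : R) : 0 <= s -> 0 <= r -> 0 <= a ->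
  t^+2 <= s^+2 * r^+2 -> a^+2 = s^+2 + 2*t + r^+2 -> a <= s + r.
Proof.
move=> s0 r0 a0 ht ha; have /andP[h1 h2] := abs_t s0 r0 ht.
apply: sq_le; first lra.
rewrite ha; nra.
Qed.

Lemma case1 (s r t a b c : R) : 0 <= s -> 0 <= r -> 0 <= a -> 0 <= b -> 0 < c ->
  t^+2 <= s^+2 * r^+2 -> a^+2 = s^+2 + 2*t + r^+2 -> b^+2 = s^+2 - 2*t + r^+2 ->
  s <= 3/4 * c -> r < c / 4 ->
  F c a (s^+2 + t) + F c b (s^+2 - t) = 2 * s^+2.
Proof.
move=> s0 r0 a0 b0 c0 ht ha hb hs hr.
have ac : a <= c by have := a_le_sr s0 r0 a0 ht ha; lra.
have bc : b <= c.
  have ht' : (-t)^+2 <= s^+2 * r^+2 by rewrite sqrrN.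
  have := a_le_sr s0 r0 b0 ht'; rewrite hb => /(_ _)/=; lra.
by rewrite /F ac bc; lra.
Qed.

Lemma clipped (s r t a c : R) : 0 <= s -> 0 <= r -> 0 <= a -> 0 < c ->
  t^+2 <= s^+2 * r^+2 -> a^+2 = s^+2 + 2*t + r^+2 ->
  3/4 * c < s -> r < c / 4 -> c < a ->
  3/4 * c * s <= c * (s^+2 + t) / a.
Proof.
move=> s0 r0 a0 c0 ht ha hs hr ca.
have ap : 0 < a by lra.
have /andP[h1 h2] := abs_t s0 r0 ht.
have r3 : 3 * r <= s by lra.
have st : 0 <= s^+2 + t.
  have : s * r <= s * s / 3 by rewrite ler_pdivlMr //; nra.
  nra.
rewrite ler_pdivlMr //.
suff h : 3/4 * s * a <= s^+2 + t by have := ler_wpM2l (ltW c0) h; nra.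
apply: sq_le => //.
rewrite !exprMn ha.
have : 9 * (s^+2 * r^+2) <= s^+2 * s^+2.
  have : 9 * r^+2 <= s^+2 by nra.
  nra.
have : 0 <= (6 * s^+2 + 7 * t)^+2 by apply: sqr_ge0.
nra.
Qed.

Lemma delicate (s r t b c : R) : 0 <= s -> 0 <= r -> 0 <= b -> 0 < c ->
  t^+2 <= s^+2 * r^+2 -> b^+2 = s^+2 - 2*t + r^+2 ->
  3/4 * c < s -> r < c / 4 -> c < b -> t <= 0 ->
  3/2 * c * s <= s^+2 + t + c * (s^+2 - t) / b.
Proof.
move=> s0 r0 b0 c0 ht hb hs hr cb t0.
have bp : 0 < b by lra.
have ht' : (-t)^+2 <= s^+2 * r^+2 by rewrite sqrrN.
have bsr : b <= s + r by apply: (a_le_sr s0 r0 b0 ht'); rewrite hb; lra.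
have /andP[h1 h2] := abs_t s0 r0 ht.
have srp : 0 < s + r by lra.
have st : 0 <= s^+2 - t by nra.
have : c * (s^+2 - t) / (s + r) <= c * (s^+2 - t) / b.
  rewrite ler_pdivlMr // mulrAC ler_pdivrMr //.
  by apply: ler_wpM2l; nra.
suff : 3/2 * c * s <= s^+2 + t + c * (s^+2 - t) / (s + r) by lra.
suff : 3/2 * c * s - (s^+2 + t) <= c * (s^+2 - t) / (s + r) by lra.
rewrite ler_pdivlMr //.
have e1 : 0 <= s * (s + r) * (s - r - c / 2).
  by apply: mulr_ge0; [apply: mulr_ge0|]; lra.
have e2 : 0 <= (s * r + t) * (s + r - c) by apply: mulr_ge0; lra.
nra.
Qed.

Lemma case2 (s r t a b c : R) : 0 <= s -> 0 <= r -> 0 <= a -> 0 <= b -> 0 < c ->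
  t^+2 <= s^+2 * r^+2 -> a^+2 = s^+2 + 2*t + r^+2 -> b^+2 = s^+2 - 2*t + r^+2 ->
  3/4 * c < s -> r < c / 4 ->
  3/2 * c * s <= F c a (s^+2 + t) + F c b (s^+2 - t).
Proof.
move=> s0 r0 a0 b0 c0 ht ha hb hs hr.
have ht' : (-t)^+2 <= s^+2 * r^+2 by rewrite sqrrN.
have hb' : b^+2 = s^+2 + 2 * (-t) + r^+2 by rewrite hb; lra.
have ha' : a^+2 = s^+2 - 2 * (-t) + r^+2 by rewrite ha; lra.
have /andP[h1 h2] := abs_t s0 r0 ht.
have cs : 3/4 * c * s <= s^+2 by nra.
rewrite /F; case: ifP => ac; case: ifP => bc.
- lra.
- have ca : c < b by rewrite ltNge bc.
  have [t0|t0] := boolP (t <= 0).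
    exact: (delicate s0 r0 b0 c0 ht hb hs hr ca t0).
  move: t0; rewrite -ltNge => t0.
  have := clipped s0 r0 b0 c0 ht' hb' hs hr ca.
  lra.
- have ca : c < a by rewrite ltNge ac.
  have [t0|t0] := boolP (t <= 0).
    have := clipped s0 r0 a0 c0 ht ha hs hr ca. lra.
  move: t0; rewrite -ltNge => t0.
  have := delicate s0 r0 a0 c0 ht' ha' hs hr ca.
  rewrite opprK; lra.
- have ca : c < a by rewrite ltNge ac.
  have cb : c < b by rewrite ltNge bc.
  have := clipped s0 r0 a0 c0 ht ha hs hr ca.
  have := clipped s0 r0 b0 c0 ht' hb' hs hr cb.
  lra.
Qed.

Lemma Fbound (s r t a c : R) : 0 <= s -> 0 <= r -> 0 <= a -> 0 < c ->
  t^+2 <= s^+2 * r^+2 -> a^+2 = s^+2 + 2*t + r^+2 ->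
  `|F c a (s^+2 + t)| <= c * s.
Proof.
move=> s0 r0 a0 c0 ht ha.
have h : `|s^+2 + t| <= s * a.
  apply: sq_le; first exact: mulr_ge0.
  rewrite real_normK ?num_real // exprMn ha; nra.
rewrite /F; case: ifP => ac.
  apply: (le_trans h); nra.
have ap : 0 < a by move/negbT: ac; rewrite -ltNge; lra.
rewrite normrM normfV (gtr0_norm ap) normrM (gtr0_norm c0).
rewrite ler_pdivrMr // -mulrA ler_pM2l //.
Qed.
End S.

Section V.
Variables (R : realType) (d : nat).
Implicit Types (u w x v : 'rV[R]_d).

Lemma dotvC u w : dotv u w = dotv w u.
Proof. by apply: eq_bigr => i _; rewrite mulrC. Qed.

Lemma dotvDr u w x : dotv u (w + x) = dotv u w + dotv u x.
Proof. by rewrite /dotv -big_split; apply: eq_bigr => i _; rewrite mxE mulrDr. Qed.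

Lemma dotvDl u w x : dotv (w + x) u = dotv w u + dotv x u.
Proof. by rewrite dotvC dotvDr !(dotvC u). Qed.

Lemma dotvZr u w (k : R) : dotv u (k *: w) = k * dotv u w.
Proof. by rewrite /dotv mulr_sumr; apply: eq_bigr => i _; rewrite mxE mulrCA. Qed.

Lemma dotvZl u w (k : R) : dotv (k *: w) u = k * dotv w u.
Proof. by rewrite dotvC dotvZr dotvC. Qed.

Lemma dotvNr u w : dotv u (- w) = - dotv u w.
Proof. by rewrite -scaleN1r dotvZr mulN1r. Qed.

Lemma dotvNl u w : dotv (- w) u = - dotv w u.
Proof. by rewrite dotvC dotvNr dotvC. Qed.

Lemma dotv0r u : dotv u 0 = 0.
Proof. by rewrite /dotv big1 // => i _; rewrite mxE mulr0. Qed.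

Lemma dotv_ge0 u : 0 <= dotv u u.
Proof. by apply: sumr_ge0 => i _; rewrite -expr2 sqr_ge0. Qed.

Lemma enorm_ge0 u : 0 <= enorm u.
Proof. exact: sqrtr_ge0. Qed.

Lemma enorm_sq u : enorm u ^+ 2 = dotv u u.
Proof. by rewrite /enorm sqr_sqrtr // dotv_ge0. Qed.

Lemma dotv_sqD u w : dotv (u + w) (u + w) = dotv u u + 2 * dotv u w + dotv w w.
Proof. rewrite !dotvDl !dotvDr (dotvC w u); ring. Qed.

Lemma CS u w : dotv u w ^+ 2 <= dotv u u * dotv w w.
Proof.
set V := dotv u u; set X := dotv w w; set t := dotv u w.
have h1 : 0 <= V * (V * X - t ^+ 2).
  have := dotv_ge0 (V *: w - t *: u).
  rewrite dotvDl !dotvDr !dotvNl !dotvNr !dotvZl !dotvZr (dotvC w u) -/V -/X -/t.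
  move=> h; nra.
have h2 : 0 <= X * (V * X - t ^+ 2).
  have := dotv_ge0 (X *: u - t *: w).
  rewrite dotvDl !dotvDr !dotvNl !dotvNr !dotvZl !dotvZr (dotvC w u) -/V -/X -/t.
  move=> h; nra.
have V0 := dotv_ge0 u; have X0 := dotv_ge0 w.
have hp := dotv_ge0 (u + w); have hm := dotv_ge0 (u - w).
rewrite dotv_sqD in hp; rewrite dotv_sqD dotvNr dotvNl dotvNr opprK in hm.
rewrite -/V -/X -/t in hp hm.
have [V0'|Vn] := eqVneq V 0; last first.
  have Vp : 0 < V by rewrite lt0r Vn /=; exact: dotv_ge0.
  by have := h1; rewrite pmulr_rge0 //; lra.
have [X0'|Xn] := eqVneq X 0; last first.
  have Xp : 0 < X by rewrite lt0r Xn /=; exact: dotv_ge0.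
  by have := h2; rewrite pmulr_rge0 //; lra.
rewrite V0' X0' in hp hm *; nra.
Qed.

Lemma dot_clip v u (c : R) : 0 < c -> dotv v (clip u c) = F c (enorm u) (dotv v u).
Proof.
move=> c0; rewrite /clip; case: eqP => [->|un].
  by rewrite !dotv0r /F; case: ifP => //; rewrite mulr0 mul0r.
rewrite dotvZr; set a := enorm u; set w := dotv v u.
have a0 : 0 <= a by exact: enorm_ge0.
have hcs : w ^+ 2 <= dotv v v * a ^+ 2 by rewrite /a enorm_sq; exact: CS.
have [a0'|an] := eqVneq a 0.
  have w0 : w = 0 by move: hcs; rewrite a0' expr0n /= mulr0; nra.
  by rewrite w0 mulr0 /F; case: ifP => //; rewrite mulr0 mul0r.
have ap : 0 < a by rewrite lt0r an.
rewrite /F; case: ifP => ac.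
  by rewrite min_l ?mul1r // ler_pdivlMr // mul1r.
rewrite min_r; first by rewrite mulrAC.
rewrite ler_pdivrMr // mul1r; move/negbT: ac; rewrite -ltNge; exact: ltW.
Qed.

Definition fv v (c : R) x := dotv v (clip (v + x) c).

Lemma fv_F v c x : 0 < c ->
  fv v c x = F c (enorm (v + x)) (enorm v ^+ 2 + dotv v x).
Proof. by move=> c0; rewrite /fv dot_clip // dotvDr enorm_sq. Qed.

Lemma fv_Fm v c x : 0 < c ->
  fv v c (- x) = F c (enorm (v - x)) (enorm v ^+ 2 - dotv v x).
Proof. by move=> c0; rewrite /fv dot_clip // dotvDr enorm_sq dotvNr. Qed.

Lemma hyps v x : [/\ dotv v x ^+ 2 <= enorm v ^+ 2 * enorm x ^+ 2,
  enorm (v + x) ^+ 2 = enorm v ^+ 2 + 2 * dotv v x + enorm x ^+ 2 &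
  enorm (v - x) ^+ 2 = enorm v ^+ 2 - 2 * dotv v x + enorm x ^+ 2].
Proof.
rewrite !enorm_sq; split; first exact: CS.
  by rewrite dotv_sqD.
by rewrite dotv_sqD dotvNr dotvNl dotvNr opprK mulrN.
Qed.

Lemma P0 v c x : 0 < c -> 0 <= fv v c x + fv v c (- x).
Proof.
move=> c0; rewrite fv_F // fv_Fm //; have [h1 h2 h3] := hyps v x.
by apply: (key_ge0 (r := enorm x)) => //; exact: enorm_ge0.
Qed.

Lemma P1 v c x : 0 < c -> enorm v <= 3/4 * c -> enorm x < c / 4 ->
  fv v c x + fv v c (- x) = 2 * enorm v ^+ 2.
Proof.
move=> c0 hv hx; rewrite fv_F // fv_Fm //; have [h1 h2 h3] := hyps v x.
by apply: (case1 (r := enorm x)) => //; exact: enorm_ge0.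
Qed.

Lemma P2 v c x : 0 < c -> 3/4 * c < enorm v -> enorm x < c / 4 ->
  3/2 * c * enorm v <= fv v c x + fv v c (- x).
Proof.
move=> c0 hv hx; rewrite fv_F // fv_Fm //; have [h1 h2 h3] := hyps v x.
by apply: (case2 (r := enorm x)) => //; exact: enorm_ge0.
Qed.

Lemma PB v c x : 0 < c -> `|fv v c x| <= c * enorm v.
Proof.
move=> c0; rewrite fv_F //; have [h1 h2 h3] := hyps v x.
by apply: (Fbound (r := enorm x)) => //; exact: enorm_ge0.
Qed.
End V.

Section M.
Variables (R : realType) (d : nat).
Local Notation T := (Rd R d).

Lemma box_meas (a b : 'rV[R]_d) : measurable (box a b : set T).
Proof. by apply: sub_sigma_algebra; exists a, b. Qed.

Lemma abs_le_sum (x : 'rV[R]_d) j : `|x ord0 j| <= \sum_(k < d) `|x ord0 k|.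
Proof.
rewrite (bigD1 j) //= lerDl; exact: sumr_ge0.
Qed.

Lemma coord_meas i : measurable_fun setT (fun x : T => x ord0 i).
Proof.
apply: (measurability _ (measurable_realfun.RGenOInfty.measurableE R)) => //.
move=> /= _ [_ [al ->] <-].
pose an (n : nat) : 'rV[R]_d := \row_j (if j == i then al else - n%:R).
pose bn (n : nat) : 'rV[R]_d := \row_j (n%:R : R).
suff -> : setT `&` (fun x : T => x ord0 i) @^-1` `]al, +oo[%classic = \bigcup_n box (an n) (bn n).
  by apply: bigcupT_measurable => n; exact: box_meas.
apply/seteqP; split => x /=.
- move=> [_ ]; rewrite /= in_itv /= andbT => h1.
  have hsum := abs_le_sum x.
  set sm := \sum_(k < d) `|x ord0 k| in hsum *.
  have hN := Num.Theory.truncnS_gt sm.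
  exists (Num.truncn sm).+1 => // j; rewrite !mxE.
  set N := ((Num.truncn sm).+1)%:R in hN *.
  have := hsum j => h4.
  have : `|x ord0 j| < N by lra.
  rewrite ltr_norml => /andP[h5 h6].
  case: eqP => [eji|_]; apply/andP; split; try exact: ltW; try done.
  by rewrite eji.
- move=> [n _ hb]; have := hb i; rewrite !mxE eqxx => /andP[hh _].
  by split => //; rewrite /= in_itv /= hh.
Qed.

Lemma dot_meas (w : 'rV[R]_d) : measurable_fun setT (fun x : T => dotv w x).
Proof.
rewrite /dotv; apply: measurable_sum => i.
apply: measurable_realfun.measurable_funM; [exact: measurable_cst | exact: coord_meas].
Qed.

Lemma sq_meas (w : 'rV[R]_d) : measurable_fun setT (fun x : T => dotv (w + x) (w + x)).
Proof.
rewrite /dotv; apply: measurable_sum => i.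
have e : (fun x : T => (w + x) ord0 i) = (fun x : T => w ord0 i + x ord0 i).
  by apply/funext => x; rewrite mxE.
by apply: measurable_realfun.measurable_funM; rewrite e; apply: measurable_realfun.measurable_funD;
  [exact: measurable_cst | exact: coord_meas|exact: measurable_cst | exact: coord_meas].
Qed.

Lemma sqrt_meas : measurable_fun setT (@Num.sqrt R).
Proof. by apply: measurable_realfun.nondecreasing_measurable => // x y xy; exact: ler_wsqrtr. Qed.

Lemma hinv_meas (c : R) : 0 < c -> measurable_fun setT (fun y : R => (Num.max y c)^-1).
Proof.
move=> c0; apply: measurable_realfun.nonincreasing_measurable => // x y xy.
have hx : 0 < Num.max x c by rewrite lt_max c0 orbT.
have hy : 0 < Num.max y c by rewrite lt_max c0 orbT.
rewrite lef_pV2 // ?posrE //.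
by rewrite ge_max !le_max xy lexx !orbT.
Qed.

Lemma enorm_meas (w : 'rV[R]_d) : measurable_fun setT (fun x : T => enorm (w + x)).
Proof.
exact: (measurableT_comp sqrt_meas (sq_meas w)).
Qed.

Lemma F_max (c a w : R) : 0 < c -> 0 <= a -> F c a w = c * w * (Num.max a c)^-1.
Proof.
move=> c0 a0; rewrite /F; case: ifP => ac.
  by rewrite max_r // mulrAC divff ?mul1r // gt_eqF.
by rewrite max_l //; move/negbT: ac; rewrite -ltNge => /ltW.
Qed.

Lemma fv_meas (v : 'rV[R]_d) (c : R) : 0 < c -> measurable_fun setT (fun x : T => fv v c x).
Proof.
move=> c0.
have e : (fun x : T => fv v c x) =
  (fun x : T => c * (enorm v ^+ 2 + dotv v x) * (Num.max (enorm (v + x)) c)^-1).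
  by apply/funext => x; rewrite fv_F // F_max // enorm_ge0.
rewrite e; apply: measurable_realfun.measurable_funM.
  apply: measurable_realfun.measurable_funM; first exact: measurable_cst.
  by apply: measurable_realfun.measurable_funD; [exact: measurable_cst|exact: dot_meas].
exact: (measurableT_comp (hinv_meas c0) (enorm_meas v)).
Qed.
End M.

Section R1.
Variables (R : realType) (d : nat).
Local Notation T := (Rd R d).

Lemma meas_coords (f : 'I_d -> T -> R) (I : 'I_d -> set R) :
  (forall i, measurable_fun setT (f i)) -> (forall i, measurable (I i)) ->
  measurable [set x : T | forall i, I i (f i x)].
Proof.
move=> mf mI.
have -> : [set x : T | forall i, I i (f i x)] = \bigcap_(i in [set: 'I_d]) (f i @^-1` I i).
  apply/seteqP; split => x /=; first by move=> h i _; exact: h.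
  by move=> h i; apply: h.
apply: fin_bigcap_measurable; first exact: finite_finset.
move=> i _; rewrite -(setTI (_ @^-1` _)); exact: (mf i measurableT _ (mI i)).
Qed.

Lemma neg_meas : measurable_fun setT (fun x : T => (- x : T)).
Proof.
have mE : @measurable _ T = <<s (@boxes R d) >> by [].
apply: (measurability _ mE) => //.
move=> _ [_ [a [b ->]] <-].
have -> : setT `&` (fun x : T => (- x : T)) @^-1` box a b =
   [set x : T | forall i, [set` `]a ord0 i, b ord0 i]] ((fun i (x : T) => - x ord0 i) i x)].
  apply/seteqP; split => x /=.
    by move=> [_ h] i; have := h i; rewrite /= in_itv /= mxE.
  by move=> h; split => // i; have := h i; rewrite /= in_itv /= mxE.
apply: (meas_coords (f := fun i (x : T) => - x ord0 i) (I := fun i => [set` `]a ord0 i, b ord0 i]])) => i; last exact: measurable_itv.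
exact: measurable_realfun.measurable_funN (coord_meas i).
Qed.

Definition ob (a b : 'rV[R]_d) : set T :=
  [set x : T | forall i, x ord0 i \in `]a ord0 i, b ord0 i[].

Lemma ob_meas a b : measurable (ob a b).
Proof.
apply: (meas_coords (f := fun i (x : T) => x ord0 i)
   (I := fun i => [set` `]a ord0 i, b ord0 i[])) => i.
  exact: coord_meas.
exact: measurable_itv.
Qed.

Definition eps (n : nat) : R := (n.+1%:R)^-1.

Lemma eps_gt0 n : 0 < eps n.
Proof. by rewrite /eps invr_gt0 ltr0Sn. Qed.

Lemma eps_mono n m : (n <= m)%N -> eps m <= eps n.
Proof.
move=> nm; rewrite /eps lef_pV2 ?posrE ?ltr0Sn //.
by rewrite ler_nat ltnS.
Qed.

Lemma inv_lt (y N : R) : 0 < y -> 0 < N -> y^-1 < N -> N^-1 < y.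
Proof.
move=> y0 N0 h; rewrite -(invrK y) ltf_pV2 ?posrE ?invr_gt0 //.
Qed.

Lemma eps_small (y : 'I_d -> R) : (forall i, 0 < y i) -> exists n, forall i, eps n < y i.
Proof.
move=> yp; set S := \sum_(i < d) (y i)^-1.
exists (Num.truncn S) => i; apply: inv_lt; [exact: yp | exact: ltr0Sn |].
have hS := Num.Theory.truncnS_gt S.
apply: (le_lt_trans _ hS).
rewrite /S (bigD1 i) //= lerDl; apply: sumr_ge0 => j _.
by rewrite invr_ge0 ltW.
Qed.


Lemma eps_small1 (y : R) : 0 < y -> exists n, eps n < y.
Proof.
move=> y0; exists (Num.truncn (y^-1)); apply: inv_lt; [exact: y0 | exact: ltr0Sn |].
exact: Num.Theory.truncnS_gt.
Qed.

Definition bm (b : 'rV[R]_d) (n : nat) : 'rV[R]_d := \row_i (b ord0 i - eps n).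
Definition bp (b : 'rV[R]_d) (n : nat) : 'rV[R]_d := \row_i (b ord0 i + eps n).

Lemma ob_union a b : ob a b = \bigcup_n box a (bm b n).
Proof.
apply/seteqP; split => x /=.
- move=> h.
  have [n hn] : exists n, forall i, eps n < b ord0 i - x ord0 i.
    apply: eps_small => i; have := h i; rewrite in_itv /= => /andP[h1 h2]; lra.
  exists n => // i; rewrite mxE; have := h i; rewrite in_itv /= => /andP[h1 h2].
  apply/andP; split => //; have := hn i; lra.
- move=> [n _ hb] i; have := hb i; rewrite mxE => /andP[h1 h2].
  rewrite in_itv /= h1 /=; have := eps_gt0 n; lra.
Qed.

Lemma box_nd a b : nondecreasing_seq (fun n => box a (bm b n)).
Proof.
move=> n m nm; apply/subsetPset => x hx i; have := hx i; rewrite !mxE.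
move=> /andP[h1 h2]; apply/andP; split => //; have := eps_mono nm; lra.
Qed.

Lemma box_cap a b : box a b = \bigcap_n ob a (bp b n).
Proof.
apply/seteqP; split => x /=.
- move=> h n _ i; have := h i; rewrite in_itv /= mxE => /andP[h1 h2].
  rewrite h1 /=; have := eps_gt0 n; lra.
- move=> h i; apply/andP; split.
    by have := h 0%N I i; rewrite in_itv /= => /andP[].
  rewrite leNgt; apply/negP => hi.
  have [n hn] := eps_small1 (y := x ord0 i - b ord0 i) (ltac:(lra)).
  have := h n I i; rewrite in_itv /= mxE => /andP[_ h2]; lra.
Qed.

Lemma neg_ob a b : (fun x : T => (- x : T)) @^-1` ob a b = ob (- b) (- a).
Proof.
apply/seteqP; split => x /= h i; have := h i; rewrite !in_itv /= !mxE => /andP[h1 h2];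
  apply/andP; split; lra.
Qed.

Definition obs : set (set T) := [set A | exists a b, A = ob a b].

Lemma obs_setI : setI_closed obs.
Proof.
move=> _ _ [a [b ->]] [a' [b' ->]].
exists (\row_i Num.max (a ord0 i) (a' ord0 i)), (\row_i Num.min (b ord0 i) (b' ord0 i)).
apply/seteqP; split => x /=.
- move=> [h h'] i; have := h i; have := h' i; rewrite !in_itv /= !mxE.
  by move=> /andP[h1 h2] /andP[h3 h4]; rewrite gt_max lt_min h1 h2 h3 h4.
- move=> h; split => i; have := h i; rewrite !in_itv /= !mxE gt_max lt_min;
  by move=> /andP[/andP[h1 h2] /andP[h3 h4]]; rewrite ?h1 ?h2 ?h3 ?h4.
Qed.

Definition gn (n : nat) : set T := ob (const_mx (- n.+1%:R)) (const_mx n.+1%:R).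

Lemma gn_cover : \bigcup_k gn k = setT.
Proof.
apply/seteqP; split => x //= _.
have hsum := abs_le_sum x.
set sm := \sum_(k < d) `|x ord0 k| in hsum.
have hN := Num.Theory.truncnS_gt sm.
exists (Num.truncn sm) => // j; rewrite !mxE in_itv /=.
have := hsum j => h4.
have : `|x ord0 j| < (Num.truncn sm).+1%:R by lra.
by rewrite ltr_norml.
Qed.

Lemma sigma_sub : forall A, measurable (A : set T) -> <<s obs >> A.
Proof.
apply: smallest_sub; first exact: smallest_sigma_algebra.
move=> _ [a [b ->]]; rewrite box_cap.
apply: (@bigcapT_measurable _ (g_sigma_algebraType obs)) => n.
by apply: sub_sigma_algebra; exists a, (bp b n).
Qed.
End R1.

Section L.
Variables (R : realType) (d : nat) (lam : {measure set (Rd R d) -> \bar R}).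
Hypothesis Hlam : is_lebesgue_Rd lam.
Local Notation T := (Rd R d).

Definition negT (x : T) : T := - x.

Definition lamN := pushforward lam negT.

Let lamN0 : lamN set0 = 0%E.
Proof. by rewrite /lamN /pushforward preimage_set0 measure0. Qed.

Let lamN_ge0 A : (0 <= lamN A)%E.
Proof. rewrite /lamN /pushforward; exact: measure_ge0. Qed.

Let lamN_sigma_additive : semi_sigma_additive lamN.
Proof.
move=> F mF tF mUF; rewrite /lamN /pushforward preimage_bigcup.
apply: measure_semi_sigma_additive.
- by move=> n; rewrite -[X in measurable X]setTI; exact: neg_meas.
- apply/trivIsetP => /= i j _ _ ij; rewrite -preimage_setI.
  by move/trivIsetP : tF => /(_ _ _ _ _ ij) ->//; rewrite preimage_set0.
- by rewrite -preimage_bigcup -[X in measurable X]setTI; exact: neg_meas.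
Qed.

HB.instance Definition _ := isMeasure.Build _ _ _
  lamN lamN0 lamN_ge0 lamN_sigma_additive.

Lemma lam_box_bm a b n :
  lam (box a (bm b n)) = (\prod_(i < d) Num.max (b ord0 i - eps R n - a ord0 i) 0)%:E.
Proof. by rewrite Hlam; congr EFin; apply: eq_bigr => i _; rewrite mxE. Qed.

Lemma lam_ob a b : lam (ob a b) = lim ((fun n => lam (box a (bm b n))) @ \oo).
Proof.
rewrite ob_union; apply/esym/cvg_lim => //.
have h1 : forall n, measurable (box a (bm b n) : set T) by move=> n; exact: box_meas.
have h2 : measurable (\bigcup_n (box a (bm b n) : set T)).
  by apply: bigcupT_measurable => n; exact: box_meas.
exact: (nondecreasing_cvg_mu h1 h2 (@box_nd R d a b)).
Qed.

Lemma lam_ob_neg a b : lam (ob (- b) (- a)) = lam (ob a b).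
Proof.
rewrite !lam_ob; congr (lim (_ @ \oo)); apply/funext => n.
rewrite !lam_box_bm; congr EFin; apply: eq_bigr => i _; rewrite !mxE.
congr (Num.max _ 0); ring.
Qed.

Lemma lamN_lam A : measurable A -> lamN A = lam A.
Proof.
move=> mA.
apply: (@g_sigma_algebra_measure_unique _ _ T (@obs R d) _ (@gn R d)).
- by move=> _ [a [b ->]]; exact: ob_meas.
- by move=> n; exists (const_mx (- n.+1%:R)), (const_mx n.+1%:R).
- exact: gn_cover.
- exact: obs_setI.
- move=> _ [a [b ->]]; change (lam (negT @^-1` ob a b) = lam (ob a b)).
  have -> : negT @^-1` ob a b = ob (- b) (- a) by exact: neg_ob.
  exact: lam_ob_neg.
- move=> k; change (lam (negT @^-1` @gn R d k) < +oo)%E.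
  apply: (@le_lt_trans _ _ (lam (box (const_mx (- k.+1%:R)) (const_mx k.+1%:R)))).
    apply: le_measure; rewrite ?inE; [| exact: box_meas |].
      by rewrite -[X in measurable X]setTI; apply: neg_meas => //; exact: ob_meas.
    move=> x hx i; have := hx i; rewrite !in_itv /= !mxE => /andP[h1 h2].
    by apply/andP; split; lra.
  by rewrite Hlam ltry.
- exact: sigma_sub.
Qed.

Lemma negT_meas : measurable_fun setT negT.
Proof. exact: neg_meas. Qed.

Lemma int_neg_ge0 (f : T -> \bar R) : measurable_fun setT f -> (forall x, (0 <= f x)%E) ->
  (\int[lam]_x f (negT x) = \int[lam]_x f x)%E.
Proof.
move=> mf f0.
have h := ge0_integral_pushforward negT_meas lam measurableT mf (fun y _ => f0 y).
rewrite preimage_setT in h.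
rewrite -[LHS]/(\int[lam]_x (f \o negT) x)%E -h.
change (\int[lamN]_y f y = \int[lam]_x f x)%E.
by apply: eq_measure_integral => A mA _; exact: lamN_lam.
Qed.

Lemma int_neg (h : T -> R) : measurable_fun setT h ->
  lam.-integrable setT (fun x => (h x)%:E) ->
  (\int[lam]_x (h (negT x))%:E = \int[lam]_x (h x)%:E)%E.
Proof.
move=> mh ih.
have mf : measurable_fun setT (EFin \o h) by apply/measurable_realfun.measurable_EFinP.
have ih' : lam.-integrable (negT @^-1` setT) ((EFin \o h) \o negT).
  rewrite preimage_setT; apply/integrableP; split.
    exact: measurableT_comp mf negT_meas.
  have := int_neg_ge0 (f := fun x => `|(h x)%:E|%E) _ _.
  rewrite /comp => ->.
  - by case/integrableP: ih.
  - exact: measurableT_comp mf.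
  - by move=> x; exact: abse_ge0.
have e := integral_pushforward negT_meas mf ih' measurableT.
rewrite preimage_setT in e.
rewrite -[LHS]/(\int[lam]_x ((EFin \o h) \o negT) x)%E -e.
change (\int[lamN]_y (EFin \o h) y = \int[lam]_x (h x)%:E)%E.
by apply: eq_measure_integral => A mA _; exact: lamN_lam.
Qed.
End L.

Unset Implicit Arguments. Set Strict Implicit.

Theorem theorem2 (R : realType) (d : nat)
    (lam : {measure set (Rd R d) -> \bar R}) (Hlam : is_lebesgue_Rd lam)
    (p : Rd R d -> R) (Hp : is_density lam p)
    (Hsym : forall xi : Rd R d, p xi = p (- xi))
    (c : R) (hc : 0 < c) (v : 'rV[R]_d) :
  let E := dexpect lam p (fun xi => dotv v (clip (v + xi) c)) in
  let q := dprob lam p [set xi | enorm xi < c / 4] in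
  (enorm v <= 3 / 4 * c -> ((enorm v ^+ 2)%:E * q <= E)%E) /\
  (3 / 4 * c < enorm v -> ((3 / 4 * c * enorm v)%:E * q <= E)%E).
Proof.
move=> E q.
have [mp p0 p1] := Hp.
set A := [set xi : Rd R d | enorm xi < c / 4].
have menorm : measurable_fun setT (fun x : Rd R d => enorm x).
  have e : (fun x : Rd R d => enorm x) = (fun x : Rd R d => enorm (0 + x)).
    by apply/funext => x; rewrite add0r.
  by rewrite e; exact: enorm_meas.
have mA : measurable A.
  have := menorm measurableT _ (measurable_itv `]-oo, c / 4[); rewrite setTI.
  congr measurable; apply/seteqP; split => x /=; by rewrite in_itv.
have mfv : measurable_fun setT (fun x : Rd R d => fv v c x) by exact: fv_meas.
have mfvN : measurable_fun setT (fun x : Rd R d => fv v c (- x)).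
  exact: (measurableT_comp mfv (@negT_meas R d)).
have ip : lam.-integrable setT (fun x => (p x)%:E).
  apply/integrableP; split; first exact/measurable_EFinP.
  rewrite (eq_integral (fun x => (p x)%:E)); first by rewrite p1 ltry.
  by move=> x _; rewrite /= ger0_norm.
have iG (f : Rd R d -> R) : measurable_fun setT f -> (forall x, `|f x| <= c * enorm v) ->
    lam.-integrable setT (fun x => (p x * f x)%:E).
  move=> mf fb.
  apply: (le_integrable measurableT (g := fun x => ((c * enorm v)%:E * (p x)%:E)%E)).
  - by apply/measurable_EFinP; exact: measurable_funM.
  - move=> x _ /=; rewrite lee_fin !normrM (ger0_norm (p0 x)) (ger0_norm (ltW hc)).
    rewrite (ger0_norm (enorm_ge0 v)) mulrC.
    by have := fb x; have := p0 x; nra.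
  - exact: integrableZl.
have iH := iG _ mfv (fun x => PB v x hc).
have iH2 := iG _ mfvN (fun x => PB v (- x) hc).
have e2 : (\int[lam]_x (p x * fv v c (- x))%:E = E)%E.
  have := int_neg Hlam (h := fun x => p x * fv v c x) (measurable_funM mp mfv) iH.
  rewrite /E /dexpect => <-.
  by apply: eq_integral => x _; rewrite /negT -Hsym.
have esum : (E + E = \int[lam]_x (p x * (fv v c x + fv v c (- x)))%:E)%E.
  rewrite -{2}e2 /E /dexpect -integralD //.
  by apply: eq_integral => x _; rewrite -EFinD mulrDr.
have low (K2 : R) : 0 <= K2 -> (forall x, A x -> K2 <= fv v c x + fv v c (- x)) ->
    (K2%:E * q <= E + E)%E.
  move=> K0 hK; rewrite esum /q /dprob.
  have mS : measurable_fun setT (fun x => (p x * (fv v c x + fv v c (- x)))%:E).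
    apply/measurable_EFinP; apply: measurable_funM => //; exact: measurable_funD.
  have S0 x : (0 <= (p x * (fv v c x + fv v c (- x)))%:E)%E.
    by rewrite lee_fin; apply: mulr_ge0 => //; exact: P0.
  rewrite -ge0_integralZl_EFin //; last first.
    by apply/measurable_EFinP; exact: measurable_funTS.
    by move=> x _; rewrite lee_fin.
  apply: (@le_trans _ _ (\int[lam]_(x in A) (p x * (fv v c x + fv v c (- x)))%:E)%E).
    apply: ge0_le_integral => //.
    - by move=> x _; rewrite -EFinM lee_fin; apply: mulr_ge0.
    - apply/measurable_EFinP; apply: measurable_funTS; exact: measurable_funM.
    - exact: measurable_funTS.
    - move=> x Ax; rewrite -EFinM lee_fin mulrC; apply: ler_wpM2l => //; exact: hK.
  by apply: ge0_subset_integral => //.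
have Efin : E \is a fin_num by exact: integrable_fin_num iH.
have q0 : (0 <= q)%E by apply: integral_ge0 => x _; rewrite lee_fin.
have qle : (q <= 1)%E.
  rewrite -p1 /q /dprob; apply: ge0_subset_integral => //.
    exact/measurable_EFinP.
  by move=> x _; rewrite lee_fin.
have qfin : q \is a fin_num by rewrite ge0_fin_numE // (le_lt_trans qle) // ltry.
rewrite -(fineK Efin) -(fineK qfin) in low *.
have fq0 : 0 <= fine q by rewrite fine_ge0.
split => hv.
- have hK : forall x, A x -> 2 * enorm v ^+ 2 <= fv v c x + fv v c (- x).
    by move=> x Ax; rewrite (@P1 R d v c x hc hv Ax).
  have h := low (2 * enorm v ^+ 2) (mulr_ge0 (ler0n _ 2) (sqr_ge0 _)) hK.
  move: h; rewrite -!EFinM -EFinD !lee_fin => h; lra.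
- have hK0 : 0 <= 3 / 2 * c * enorm v.
    by apply: mulr_ge0; [apply: mulr_ge0 => //; exact: ltW| exact: enorm_ge0].
  have h := low (3 / 2 * c * enorm v) hK0 (fun x Ax => @P2 R d v c x hc hv Ax).
  move: h; rewrite -!EFinM -EFinD !lee_fin => h; lra.
Qed.
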